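(* Let $f,g:\mathbb N\to\mathbb C$ and $\beta\in\mathbb C$ satisfy: for every even $n\in\mathbb N$, $g(n+2)f(n+2)-g(n)f(n)\mathbf 1_{\{n\ge2\}}=\beta$. Assume $|f(2n)|>0$ for all $n\ge1$ and that $M_f=\lim_{n\to\infty}n/|f(2n)|\in[0,\infty]$ exists. Let $\mathbb D_{f,\beta}=\{\alpha\in\mathbb C: |1-\alpha\beta|<1,\ |\alpha|<M_f\}$. Then $$\Big[N,\tfrac i2\log\big(g_{N+2}L^2\big)\Big]=-i\mathbf 1$$ holds on the subspace $\mathrm{LH}\{(f_NL^{*2})^n\xi_{\alpha,f}: n\in\mathbb N,\ \alpha\in\mathbb D_{f,\beta}\}$, where $\xi_{\alpha,f}=e^{\alpha f_NL^{*2}}\Omega$.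
   Context: $\ell^2=\ell^2(\mathbb N)$, $\mathbb N=\{0,1,\dots\}$, basis $(\xi_n)$, $\Omega=\xi_0$; $N\xi_n=n\xi_n$ (self-adjoint, maximal domain). $f_NL^{*2}$: $\xi_n\mapsto f(n+2)\xi_{n+2}$; $g_{N+2}L^2$: $\xi_n\mapsto g(n)\xi_{n-2}$ ($n\ge2$), $\xi_0,\xi_1\mapsto0$ (maximal domains). Exponentials by power series on the set where the series converges. For a linear operator $A$, $\mathrm D(\log A)=\{f\in\bigcap_{k\ge0}\mathrm D(A^k):\lim_K\sum_{k=1}^K\frac1k(\mathbf 1-A)^kf\text{ exists}\}$ and $\log Af=-\sum_{k\ge1}\frac1k(\mathbf1-A)^kf$. The commutator $[A,B]=AB-BA$ is defined on $\mathrm D(AB)\cap\mathrm D(BA)$; ''$[A,B]=C$ on a subspace $\mathcal D$'' means $\mathcal D\subset\mathrm D(AB)\cap\mathrm D(BA)$ and $(AB-BA)\varphi=C\varphi$ for all $\varphi\in\mathcal D$. LH denotes linear hull. *)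

(* Defs.v *)
From Stdlib Require Import Reals Arith Factorial.
From Coquelicot Require Import Coquelicot.
Open Scope R_scope.

(* Vectors of l^2(N) are represented by their coefficient sequences
   w.r.t. the basis (xi_n): x = sum_n x n xi_n. *)
Definition vec := nat -> C.

Definition l2 (x : vec) : Prop := ex_series (fun n => (Cmod (x n)) ^ 2).

Definition l2norm2 (x : vec) : R := Series (fun n => (Cmod (x n)) ^ 2).

Definition l2conv (v : nat -> vec) (y : vec) : Prop :=
  l2 y /\ (forall K, l2 (v K)) /\
  is_lim_seq (fun K => l2norm2 (fun n => Cminus (v K n) (y n))) 0.

Fixpoint csum (a : nat -> C) (K : nat) : C :=
  match K with
  | O => RtoC 0
  | S K' => Cplus (csum a K') (a K')
  end.

(* Linear operators are represented by their graphs (functional relations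
   between l^2 vectors); A x y means x in D(A) and A x = y. *)
Definition Op := vec -> vec -> Prop.

Definition dom (A : Op) (x : vec) : Prop := exists y, A x y.

Definition Id_op : Op := fun x y => l2 x /\ y = x.

Definition comp (A B : Op) : Op := fun x z => exists y, B x y /\ A y z.

Fixpoint opow (A : Op) (k : nat) : Op :=
  match k with
  | O => Id_op
  | S k' => comp A (opow A k')
  end.

Definition scale (c : C) (A : Op) : Op :=
  fun x y => exists z, A x z /\ y = (fun n => Cmult c (z n)).

Definition one_minus (A : Op) : Op :=
  fun x y => exists z, A x z /\ y = (fun n => Cminus (x n) (z n)).

Definition log_op (A : Op) : Op :=
  fun x y =>
    (forall k, dom (opow A k) x) /\
    exists s : nat -> vec,
      (forall k, opow (one_minus A) k x (s k)) /\
      l2conv (fun K => fun n =>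
                 Copp (csum (fun k => Cmult (Cinv (RtoC (INR (S k)))) (s (S k) n)) K))
             y.

Definition exp_op (A : Op) : Op :=
  fun x y =>
    (forall k, dom (opow A k) x) /\
    exists s : nat -> vec,
      (forall k, opow A k x (s k)) /\
      l2conv (fun K => fun n =>
                 csum (fun k => Cmult (Cinv (RtoC (INR (Factorial.fact k)))) (s k n)) K)
             y.

Definition N_op : Op :=
  fun x y => l2 x /\ l2 y /\ y = (fun n => Cmult (RtoC (INR n)) (x n)).

(* f_N L^{*2} : xi_n |-> f(n+2) xi_{n+2}, maximal domain *)
Definition fNLs2 (f : nat -> C) : Op :=
  fun x y => l2 x /\ l2 y /\
    y = (fun m => match m with
                  | O => RtoC 0
                  | S O => RtoC 0
                  | S (S k) => Cmult (f m) (x k)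
                  end).

(* g_{N+2} L^2 : xi_n |-> g(n) xi_{n-2} (n >= 2), xi_0, xi_1 |-> 0, maximal domain *)
Definition gN2L2 (g : nat -> C) : Op :=
  fun x y => l2 x /\ l2 y /\ y = (fun m => Cmult (g (m + 2)%nat) (x (m + 2)%nat)).

Definition Omega : vec := fun n => match n with O => RtoC 1 | _ => RtoC 0 end.

(* "[A,B] = C on D" at a single vector: phi in D(AB) cap D(BA), (AB - BA) phi = r *)
Definition comm_at (A B : Op) (phi r : vec) : Prop :=
  exists y1 z1 y2 z2,
    B phi y1 /\ A y1 z1 /\ A phi y2 /\ B y2 z2 /\
    r = (fun n => Cminus (z1 n) (z2 n)).

Definition LH (S : vec -> Prop) (phi : vec) : Prop :=
  exists (m : nat) (c : nat -> C) (v : nat -> vec),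
    (forall j, (j < m)%nat -> S (v j)) /\
    phi = (fun n => csum (fun j => Cmult (c j) (v j n)) m).

(* Main.v *)
Require Import Defs.
From Stdlib Require Import Reals Lra Lia FunctionalExtensionality.
From Coquelicot Require Import Coquelicot.

Close Scope C_scope.
Open Scope R_scope.
Open Scope R_scope.

Fixpoint rsum (a : nat -> R) (n : nat) : R :=
  match n with O => 0 | S n => rsum a n + a n end.

Lemma rsum_ge0 a n : (forall k, 0 <= a k) -> 0 <= rsum a n.
Proof. intros H; induction n; simpl; [lra|specialize (H n); lra]. Qed.

Lemma rsum_term a n k : (forall k, 0 <= a k) -> (k < n)%nat -> a k <= rsum a n.
Proof.
  intros H; induction n; intros Hk; [lia|simpl].
  destruct (Nat.eq_dec k n) as [->|Hne].
  - pose proof (rsum_ge0 a n H); lra.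
  - assert (k < n)%nat by lia. specialize (IHn H0). specialize (H n); lra.
Qed.

Lemma Series_zero : Series (fun _ => 0) = 0.
Proof.
  rewrite (Series_ext _ (fun n => 0 * 0)); [|intros; ring].
  rewrite Series_scal_l; ring.
Qed.

Lemma Series_ge0 a : (forall n, 0 <= a n) -> ex_series a -> 0 <= Series a.
Proof.
  intros H He. rewrite <- Series_zero. apply Series_le; auto. intros; split; [lra|auto].
Qed.

Lemma Series_shift a K : ex_series a ->
  Series a = rsum a K + Series (fun k => a (K + k)%nat).
Proof.
  intros He. induction K.
  - simpl. rewrite Rplus_0_l. apply Series_ext; intros; f_equal.
  - rewrite IHK. simpl.
    rewrite (Series_incr_1 (fun k => a (K + k)%nat)).
    2: { apply (ex_series_incr_n a K); auto. }
    rewrite Nat.add_0_r.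
    rewrite (Series_ext (fun k => a (K + S k)%nat) (fun k => a (S (K + k)))).
    2: { intros; f_equal; lia. } ring.
Qed.

Lemma Series_term a n : (forall n, 0 <= a n) -> ex_series a -> a n <= Series a.
Proof.
  intros H He. rewrite (Series_shift a (S n) He).
  pose proof (rsum_term a (S n) n H ltac:(lia)).
  assert (0 <= Series (fun k => a (S n + k)%nat)).
  { apply Series_ge0; auto. apply (ex_series_incr_n a (S n)); auto. }
  lra.
Qed.

Lemma geom_series_bound (a : nat -> R) (E r : R) : 0 <= r < 1 ->
  (forall n, 0 <= a n <= E * r ^ n) ->
  ex_series a /\ Series a <= E / (1 - r).
Proof.
  intros Hr H.
  assert (Hg : ex_series (fun n => E * r ^ n)).
  { apply (ex_series_ext (fun n => scal E (r ^ n))).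
    - intros; reflexivity.
    - apply (@ex_series_scal_l R_AbsRing R_NormedModule), ex_series_geom. rewrite Rabs_pos_eq; lra. }
  split.
  - apply (@ex_series_le R_AbsRing R_CompleteNormedModule _ (fun n => E * r ^ n)); auto.
    intros n; specialize (H n). change (norm (a n)) with (Rabs (a n)).
    rewrite Rabs_pos_eq; lra.
  - apply Rle_trans with (Series (fun n => E * r ^ n)). apply Series_le; auto.
    rewrite Series_scal_l, Series_geom; [|rewrite Rabs_pos_eq; lra].
    unfold Rdiv; lra.
Qed.

Lemma Im_le_Cmod c : Rabs (Im c) <= Cmod c.
Proof.
  pose proof (Cmod2_alt c). pose proof (Cmod_ge_0 c).
  destruct (Rle_dec 0 (Im c)).
  - rewrite Rabs_pos_eq; auto. nra.
  - rewrite Rabs_left; [|lra]. nra.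
Qed.

Lemma Re_le_Cmod c : Rabs (Re c) <= Cmod c.
Proof. apply re_le_Cmod. Qed.

Lemma Cmod_le_ReIm c : Cmod c <= Rabs (Re c) + Rabs (Im c).
Proof.
  pose proof (Cmod2_alt c). pose proof (Cmod_ge_0 c).
  pose proof (Rabs_pos (Re c)). pose proof (Rabs_pos (Im c)).
  assert (Re c ^ 2 = Rabs (Re c) ^ 2) by (unfold Rabs; destruct Rcase_abs; ring).
  assert (Im c ^ 2 = Rabs (Im c) ^ 2) by (unfold Rabs; destruct Rcase_abs; ring).
  nra.
Qed.

Close Scope C_scope.
Open Scope R_scope.
Open Scope R_scope.

Definition CSeries (a : nat -> C) : C :=
  (Series (fun k => Re (a k)), Series (fun k => Im (a k))).

Lemma csum_Re a K : Re (csum a K) = rsum (fun k => Re (a k)) K.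
Proof. induction K; simpl; auto. rewrite <- IHK. reflexivity. Qed.
Lemma csum_Im a K : Im (csum a K) = rsum (fun k => Im (a k)) K.
Proof. induction K; simpl; auto. rewrite <- IHK. reflexivity. Qed.

Lemma rtail (r : nat -> R) E v : 0 <= v < 1 ->
  (forall k, Rabs (r k) <= E * v ^ k) ->
  forall K, Rabs (rsum r K - Series r) <= E * v ^ K / (1 - v).
Proof.
  intros Hv H K.
  assert (HE : forall k, 0 <= Rabs (r k) <= E * v ^ k) by (intros; split; auto using Rabs_pos).
  destruct (geom_series_bound _ _ _ Hv HE) as [Hex _].
  assert (Hr : ex_series r) by (apply ex_series_Rabs; auto).
  rewrite (Series_shift r K Hr).
  replace (rsum r K - (rsum r K + Series (fun k => r (K + k)%nat))) with
    (- Series (fun k => r (K + k)%nat)) by ring.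
  rewrite Rabs_Ropp.
  assert (HE2 : forall k, 0 <= Rabs (r (K + k)%nat) <= (E * v ^ K) * v ^ k).
  { intros k; split; [apply Rabs_pos|]. rewrite Rmult_assoc, <- pow_add. auto. }
  destruct (geom_series_bound _ _ _ Hv HE2) as [Hex2 Hle2].
  eapply Rle_trans. apply Series_Rabs; auto. exact Hle2.
Qed.

Lemma ctail (a : nat -> C) E v : 0 <= v < 1 ->
  (forall k, Cmod (a k) <= E * v ^ k) ->
  forall K, Cmod (Cminus (csum a K) (CSeries a)) <= 2 * E * v ^ K / (1 - v).
Proof.
  intros Hv H K.
  eapply Rle_trans. apply Cmod_le_ReIm.
  assert (H1 : Rabs (rsum (fun k => Re (a k)) K - Series (fun k => Re (a k))) <= E * v ^ K / (1 - v)).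
  { apply rtail; auto. intros; eapply Rle_trans; [apply Re_le_Cmod|auto]. }
  assert (H2 : Rabs (rsum (fun k => Im (a k)) K - Series (fun k => Im (a k))) <= E * v ^ K / (1 - v)).
  { apply rtail; auto. intros; eapply Rle_trans; [apply Im_le_Cmod|auto]. }
  replace (Re (Cminus (csum a K) (CSeries a))) with
    (rsum (fun k => Re (a k)) K - Series (fun k => Re (a k))).
  2: { rewrite <- csum_Re. reflexivity. }
  replace (Im (Cminus (csum a K) (CSeries a))) with
    (rsum (fun k => Im (a k)) K - Series (fun k => Im (a k))).
  2: { rewrite <- csum_Im. reflexivity. }
  unfold Rdiv in *. lra.
Qed.

Close Scope C_scope.
Open Scope R_scope.
Open Scope R_scope.

Definition ev (u : nat -> C) : vec :=
  fun n => if Nat.even n then u (Nat.div2 n) else RtoC 0.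

Lemma parity n : (exists k, n = 2 * k)%nat \/ (exists k, n = S (2 * k))%nat.
Proof.
  destruct (Nat.Even_or_Odd n) as [[k H]|[k H]]; [left|right]; exists k; lia.
Qed.

Lemma ev_even u k : ev u (2 * k)%nat = u k.
Proof. unfold ev. rewrite Nat.even_even, Nat.div2_double. auto. Qed.

Lemma ev_odd u k : ev u (S (2 * k))%nat = RtoC 0.
Proof.
  unfold ev. replace (S (2 * k)) with (2 * k + 1)%nat by lia.
  rewrite Nat.even_odd. auto.
Qed.

Lemma ev_ext u w : (forall k, u k = w k) -> ev u = ev w.
Proof. intros H; apply functional_extensionality; intros n; unfold ev; rewrite H; auto. Qed.

Lemma ev_lin (a b : C) u w :
  (fun n => Cplus (Cmult a (ev u n)) (Cmult b (ev w n))) =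
  ev (fun k => Cplus (Cmult a (u k)) (Cmult b (w k))).
Proof.
  apply functional_extensionality; intros n.
  destruct (parity n) as [[k ->]|[k ->]].
  - rewrite !ev_even. auto.
  - rewrite !ev_odd. ring.
Qed.

Lemma ev_scal (a : C) u :
  (fun n => Cmult a (ev u n)) = ev (fun k => Cmult a (u k)).
Proof.
  apply functional_extensionality; intros n.
  destruct (parity n) as [[k ->]|[k ->]].
  - rewrite !ev_even. auto.
  - rewrite !ev_odd. ring.
Qed.

Lemma ev_sub u w :
  (fun n => Cminus (ev u n) (ev w n)) = ev (fun k => Cminus (u k) (w k)).
Proof.
  apply functional_extensionality; intros n.
  destruct (parity n) as [[k ->]|[k ->]].
  - rewrite !ev_even. auto.
  - rewrite !ev_odd. ring.
Qed.

Lemma ev_bound u (c r : R) : 0 <= r ->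
  (forall k, Cmod (u k) <= c * r ^ k) ->
  forall n, 0 <= Cmod (ev u n) ^ 2 <= c ^ 2 * r ^ n.
Proof.
  intros Hr H n. split. { apply pow_le, Cmod_ge_0. }
  destruct (parity n) as [[k ->]|[k ->]].
  - rewrite ev_even. specialize (H k). pose proof (Cmod_ge_0 (u k)).
    replace (2 * k)%nat with (k + k)%nat by lia. rewrite pow_add.
    pose proof (pow_le r k Hr). nra.
  - rewrite ev_odd, Cmod_0. replace (0 ^ 2) with 0 by ring.
    apply Rmult_le_pos; [nra|apply pow_le; auto].
Qed.

Definition bnd (u : nat -> C) := exists c r, 0 <= r < 1 /\ forall k, Cmod (u k) <= c * r ^ k.

Lemma l2_ev_bound u c r : 0 <= r < 1 ->
  (forall k, Cmod (u k) <= c * r ^ k) ->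
  l2 (ev u) /\ l2norm2 (ev u) <= c ^ 2 / (1 - r).
Proof.
  intros Hr H. apply (geom_series_bound _ _ _ Hr). apply ev_bound; auto. lra.
Qed.

Lemma bnd_l2 u : bnd u -> l2 (ev u).
Proof. intros (c & r & Hr & H). apply (l2_ev_bound u c r Hr H). Qed.

Lemma l2norm2_ge0 x : l2 x -> 0 <= l2norm2 x.
Proof. intros H. apply Series_ge0; auto. intros; apply pow_le, Cmod_ge_0. Qed.

Lemma l2_term x n : l2 x -> Cmod (x n) ^ 2 <= l2norm2 x.
Proof.
  intros H. apply (Series_term (fun n => Cmod (x n) ^ 2)); auto.
  intros; apply pow_le, Cmod_ge_0.
Qed.

Lemma is_lim_geom_scal (c m : R) : 0 <= m < 1 -> is_lim_seq (fun K => c * m ^ K) 0.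
Proof.
  intros Hm. replace (Finite 0) with (Rbar_mult c 0) by (simpl; f_equal; ring).
  apply is_lim_seq_scal_l, is_lim_seq_geom. rewrite Rabs_pos_eq; lra.
Qed.

Lemma l2conv_ev (v : nat -> nat -> C) (y : nat -> C) (E m r : R) :
  0 <= m < 1 -> 0 <= r < 1 ->
  (forall K k, Cmod (Cminus (v K k) (y k)) <= E * m ^ K * r ^ k) ->
  (forall K, bnd (v K)) -> bnd y ->
  l2conv (fun K => ev (v K)) (ev y).
Proof.
  intros Hm Hr H Hv Hy. split; [apply bnd_l2; auto|split; [intros; apply bnd_l2; auto|]].
  apply is_lim_seq_le_le with (u := fun _ => 0) (w := fun K => (E ^ 2 / (1 - r)) * (m ^ 2) ^ K).
  - intros K. rewrite ev_sub.
    destruct (l2_ev_bound (fun k => Cminus (v K k) (y k)) (E * m ^ K) r Hr (H K)) as [Hl Hle].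
    split. apply l2norm2_ge0; auto.
    eapply Rle_trans; [apply Hle|]. rewrite <- pow_mult, Nat.mul_comm, pow_mult.
    right. unfold Rdiv. ring.
  - apply is_lim_seq_const.
  - apply is_lim_geom_scal. split. apply pow_le; lra. nra.
Qed.

Lemma ex_series_R_lin (a b : nat -> R) (c d : R) :
  ex_series a -> ex_series b -> ex_series (fun n => c * a n + d * b n).
Proof.
  intros Ha Hb.
  apply (ex_series_ext (fun n => plus (scal c (a n)) (scal d (b n)))); [intros; reflexivity|].
  apply (@ex_series_plus R_AbsRing R_NormedModule);
  apply (@ex_series_scal_l R_AbsRing R_NormedModule); auto.
Qed.

Lemma Cmod_sub_le a b : Cmod (Cminus a b) <= Cmod a + Cmod b.
Proof.
  unfold Cminus. eapply Rle_trans; [apply Cmod_triangle|]. rewrite Cmod_opp. lra.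
Qed.

Lemma l2_sub x y : l2 x -> l2 y -> l2 (fun n => Cminus (x n) (y n)).
Proof.
  intros Hx Hy. unfold l2.
  apply (@ex_series_le R_AbsRing R_CompleteNormedModule _
           (fun n => 2 * (Cmod (x n) ^ 2) + 2 * (Cmod (y n) ^ 2))).
  - intros n. change (norm ?z) with (Rabs z).
    pose proof (Cmod_sub_le (x n) (y n)). pose proof (Cmod_ge_0 (Cminus (x n) (y n))).
    pose proof (Cmod_ge_0 (x n)). pose proof (Cmod_ge_0 (y n)).
    rewrite Rabs_pos_eq; [|apply pow_le; auto].
    set (a := Cmod (Cminus (x n) (y n))) in *. set (b := Cmod (x n)) in *. set (c := Cmod (y n)) in *.
    simpl. assert (a*a <= (b+c)*(b+c)) by (apply Rmult_le_compat; lra). pose proof (Rle_0_sqr (b - c)); unfold Rsqr in *; nra.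
  - apply ex_series_R_lin; auto.
Qed.

Lemma l2conv_unique v y y' : l2conv v y -> l2conv v y' -> y = y'.
Proof.
  intros (Hy & Hv & Hl) (Hy' & _ & Hl'). apply functional_extensionality; intros n.
  assert (Hle : Rbar_le (Cmod (Cminus (y n) (y' n)) ^ 2) 0).
  { apply is_lim_seq_le with
      (u := fun _ => Cmod (Cminus (y n) (y' n)) ^ 2)
      (v := fun K => 2 * l2norm2 (fun n => Cminus (v K n) (y n)) +
                     2 * l2norm2 (fun n => Cminus (v K n) (y' n))).
    - intros K.
      pose proof (l2_term _ n (l2_sub _ _ (Hv K) Hy)).
      pose proof (l2_term _ n (l2_sub _ _ (Hv K) Hy')).
      simpl in *.
      replace (Cminus (y n) (y' n)) with (Cminus (Cminus (v K n) (y' n)) (Cminus (v K n) (y n))) by ring.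
      pose proof (Cmod_sub_le (Cminus (v K n) (y' n)) (Cminus (v K n) (y n))).
      pose proof (Cmod_ge_0 (Cminus (v K n) (y' n))).
      pose proof (Cmod_ge_0 (Cminus (v K n) (y n))).
      pose proof (Cmod_ge_0 (Cminus (Cminus (v K n) (y' n)) (Cminus (v K n) (y n)))).
      set (a := Cmod (Cminus (Cminus (v K n) (y' n)) (Cminus (v K n) (y n)))) in *.
      set (b := Cmod (Cminus (v K n) (y' n))) in *. set (c := Cmod (Cminus (v K n) (y n))) in *.
      simpl in *. assert (a*a <= (b+c)*(b+c)) by (apply Rmult_le_compat; lra).
      pose proof (Rle_0_sqr (b - c)); unfold Rsqr in *; nra.
    - apply is_lim_seq_const.
    - replace (Finite 0) with (Finite (2 * 0 + 2 * 0)) by (f_equal; ring).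
      apply is_lim_seq_plus';
      (replace (Finite (2 * 0)) with (Rbar_mult 2 0) by (simpl; auto));
      apply is_lim_seq_scal_l; auto. }
  simpl in Hle. pose proof (Cmod_ge_0 (Cminus (y n) (y' n))).
  assert (Cmod (Cminus (y n) (y' n)) = 0) by nra.
  apply Cmod_eq_0 in H0.
  replace (y n) with (Cplus (Cminus (y n) (y' n)) (y' n)) by ring. rewrite H0. ring.
Qed.

Close Scope C_scope.
Open Scope R_scope.
Open Scope R_scope.

Definition Af (f : nat -> C) (u : nat -> C) : nat -> C :=
  fun k => match k with O => RtoC 0 | S k' => Cmult (f (2 * S k')%nat) (u k') end.
Definition Gf (g : nat -> C) (u : nat -> C) : nat -> C :=
  fun k => Cmult (g (2 * k + 2)%nat) (u (S k)).
Definition Tf (g : nat -> C) (u : nat -> C) : nat -> C :=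
  fun k => Cminus (u k) (Gf g u k).
Definition Nf (u : nat -> C) : nat -> C :=
  fun k => Cmult (RtoC (INR (2 * k))) (u k).

Lemma fNLs2_ev f u : l2 (ev u) -> l2 (ev (Af f u)) -> fNLs2 f (ev u) (ev (Af f u)).
Proof.
  intros H1 H2. split; [auto|split; [auto|]].
  apply functional_extensionality; intros m.
  destruct m as [|[|k]].
  - reflexivity.
  - reflexivity.
  - destruct (parity k) as [[j ->]|[j ->]].
    + replace (S (S (2 * j))) with (2 * S j)%nat by lia.
      rewrite ev_even, ev_even. reflexivity.
    + replace (S (S (S (2 * j)))) with (S (2 * S j))%nat by lia.
      rewrite ev_odd, ev_odd. ring.
Qed.

Lemma gN2L2_ev g u : l2 (ev u) -> l2 (ev (Gf g u)) -> gN2L2 g (ev u) (ev (Gf g u)).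
Proof.
  intros H1 H2. split; [auto|split; [auto|]].
  apply functional_extensionality; intros m.
  destruct (parity m) as [[j ->]|[j ->]].
  - rewrite ev_even. replace (2 * j + 2)%nat with (2 * S j)%nat at 2 by lia.
    rewrite ev_even. reflexivity.
  - rewrite ev_odd. replace (S (2 * j) + 2)%nat with (S (2 * S j))%nat by lia.
    rewrite ev_odd. ring.
Qed.

Lemma N_ev u : l2 (ev u) -> l2 (ev (Nf u)) -> N_op (ev u) (ev (Nf u)).
Proof.
  intros H1 H2. split; [auto|split; [auto|]].
  apply functional_extensionality; intros m.
  destruct (parity m) as [[j ->]|[j ->]].
  - rewrite !ev_even. reflexivity.
  - rewrite !ev_odd. ring.
Qed.

Lemma one_minus_ev g u : l2 (ev u) -> l2 (ev (Gf g u)) ->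
  one_minus (gN2L2 g) (ev u) (ev (Tf g u)).
Proof.
  intros H1 H2. exists (ev (Gf g u)). split. apply gN2L2_ev; auto.
  rewrite ev_sub. reflexivity.
Qed.

Definition functional (A : Op) := forall x y y', A x y -> A x y' -> y = y'.

Lemma fNLs2_fun f : functional (fNLs2 f).
Proof. intros x y y' (_ & _ & H) (_ & _ & H'). congruence. Qed.
Lemma gN2L2_fun g : functional (gN2L2 g).
Proof. intros x y y' (_ & _ & H) (_ & _ & H'). congruence. Qed.
Lemma scale_fun c A : functional A -> functional (scale c A).
Proof. intros HA x y y' (z & Hz & ->) (z' & Hz' & ->). rewrite (HA _ _ _ Hz Hz'). auto. Qed.
Lemma opow_fun A : functional A -> forall k, functional (opow A k).
Proof.
  intros HA k; induction k; simpl.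
  - intros x y y' (_ & ->) (_ & ->); auto.
  - intros x y y' (w & Hw & H) (w' & Hw' & H').
    rewrite (IHk _ _ _ Hw Hw') in H. eapply HA; eauto.
Qed.

Lemma RtoC_neq0 x : x <> 0 -> RtoC x <> RtoC 0.
Proof. intros H H'. apply H. injection H'. auto. Qed.

Close Scope C_scope.
Open Scope R_scope.
Open Scope R_scope.

Lemma pow_le_one q n : 0 <= q <= 1 -> q ^ n <= 1.
Proof. intros H; induction n; simpl; [lra|]. pose proof (pow_le q n ltac:(lra)). nra. Qed.

Lemma pow_anti q m n : 0 <= q <= 1 -> (m <= n)%nat -> q ^ n <= q ^ m.
Proof.
  intros H Hmn. replace n with (m + (n - m))%nat by lia. rewrite pow_add.
  pose proof (pow_le q m ltac:(lra)). pose proof (pow_le_one q (n - m) H).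
  pose proof (pow_le q (n - m) ltac:(lra)). nra.
Qed.

Lemma rsum_geom q m : rsum (fun k => q ^ k) m * (1 - q) = 1 - q ^ m.
Proof. induction m; simpl; [ring|]. rewrite Rmult_plus_distr_r, IHm. ring. Qed.

Lemma bump x y : 0 <= x < y -> exists C, 1 <= C /\ forall n, INR (S n) * x ^ n <= C * y ^ n.
Proof.
  intros Hxy. set (q := x / y).
  assert (Hq : 0 <= q < 1).
  { unfold q; split. apply Rdiv_le_0_compat; lra. apply Rmult_lt_reg_r with y; [lra|]; unfold Rdiv; rewrite Rmult_assoc, Rinv_l; lra. }
  exists (/ (1 - q)). split.
  { apply Rle_trans with (/1); [rewrite Rinv_1; lra|apply Rinv_le_contravar; lra]. }
  intros n.
  assert (Hm : forall m, (m <= S n)%nat -> INR m * q ^ n <= rsum (fun k => q ^ k) m).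
  { induction m; intros Hm. simpl; lra.
    rewrite S_INR. simpl rsum. pose proof (pow_anti q m n ltac:(lra) ltac:(lia)).
    specialize (IHm ltac:(lia)). lra. }
  specialize (Hm (S n) (le_n _)).
  assert (Hr : rsum (fun k => q ^ k) (S n) <= / (1 - q)).
  { pose proof (rsum_geom q (S n)). pose proof (pow_le q (S n) ltac:(lra)).
    apply (Rmult_le_reg_r (1 - q)); [lra|]. rewrite Rinv_l; lra. }
  assert (Hx : x = q * y) by (unfold q; field; lra).
  rewrite Hx, Rpow_mult_distr.
  pose proof (pow_le y n ltac:(lra)).
  apply Rle_trans with ((INR (S n) * q ^ n) * y ^ n); [right; ring|].
  apply Rmult_le_compat_r; lra.
Qed.

Lemma mono3 D x x' y y' : 0 <= D -> 0 <= x <= x' -> 0 <= y <= y' -> D * x * y <= D * x' * y'.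
Proof. intros. apply Rmult_le_compat; try nra; try lra. Qed.

Open Scope C_scope.

Definition Tpow g k u := Nat.iter k (Tf g) u.
Definition lc (a b : C) (u w : nat -> C) : nat -> C := fun k => a * u k + b * w k.

Lemma Tpow_S g k u : Tpow g (S k) u = Tf g (Tpow g k u).
Proof. reflexivity. Qed.

Lemma Tpow_S' g k u : Tpow g (S k) u = Tpow g k (Tf g u).
Proof. unfold Tpow. rewrite Nat.iter_swap. reflexivity. Qed.

Lemma Tf_lc g a b u w : Tf g (lc a b u w) = lc a b (Tf g u) (Tf g w).
Proof. apply functional_extensionality; intros k; unfold Tf, Gf, lc; ring. Qed.

Lemma Tpow_lc g k a b u w : Tpow g k (lc a b u w) = lc a b (Tpow g k u) (Tpow g k w).
Proof. induction k; [reflexivity|]. rewrite !Tpow_S, IHk. apply Tf_lc. Qed.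

Lemma Tpow_zero g k : Tpow g k (fun _ => RtoC 0) = (fun _ => RtoC 0).
Proof.
  induction k; [reflexivity|]. rewrite Tpow_S, IHk.
  apply functional_extensionality; intros; unfold Tf, Gf; ring.
Qed.

Definition Good g u := exists v r D, (0 <= v < 1)%R /\ (0 <= r < 1)%R /\ (0 <= D)%R /\
  forall k k', (Cmod (Tpow g k u k') <= D * v ^ k * r ^ k')%R.

Lemma Good_zero g : Good g (fun _ => RtoC 0).
Proof.
  exists 0%R, 0%R, 0%R. split; [lra|split; [lra|split; [lra|]]].
  intros k k'. rewrite Tpow_zero, Cmod_0. rewrite !Rmult_0_l. lra.
Qed.

Lemma Good_lc g a b u w : Good g u -> Good g w -> Good g (lc a b u w).
Proof.
  intros (v1 & r1 & D1 & Hv1 & Hr1 & HD1 & H1) (v2 & r2 & D2 & Hv2 & Hr2 & HD2 & H2).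
  exists (Rmax v1 v2), (Rmax r1 r2), (Cmod a * D1 + Cmod b * D2)%R.
  assert (Hv : (0 <= Rmax v1 v2 < 1)%R) by (split; [eapply Rle_trans; [|apply Rmax_l]; lra|apply Rmax_lub_lt; lra]).
  assert (Hr : (0 <= Rmax r1 r2 < 1)%R) by (split; [eapply Rle_trans; [|apply Rmax_l]; lra|apply Rmax_lub_lt; lra]).
  split; [auto|split; [auto|split]].
  { pose proof (Cmod_ge_0 a); pose proof (Cmod_ge_0 b); nra. }
  intros k k'. rewrite Tpow_lc. unfold lc.
  eapply Rle_trans; [apply Cmod_triangle|]. rewrite !Cmod_mult.
  pose proof (Cmod_ge_0 a); pose proof (Cmod_ge_0 b).
  assert (E1 : (D1 * v1 ^ k * r1 ^ k' <= D1 * Rmax v1 v2 ^ k * Rmax r1 r2 ^ k')%R).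
  { apply mono3; auto; split; try (apply pow_le; lra); apply pow_incr; split; try lra; apply Rmax_l. }
  assert (E2 : (D2 * v2 ^ k * r2 ^ k' <= D2 * Rmax v1 v2 ^ k * Rmax r1 r2 ^ k')%R).
  { apply mono3; auto; split; try (apply pow_le; lra); apply pow_incr; split; try lra; apply Rmax_r. }
  specialize (H1 k k'); specialize (H2 k k').
  apply Rle_trans with (Cmod a * (D1 * Rmax v1 v2 ^ k * Rmax r1 r2 ^ k') +
                        Cmod b * (D2 * Rmax v1 v2 ^ k * Rmax r1 r2 ^ k'))%R; [|right; ring].
  apply Rplus_le_compat; apply Rmult_le_compat_l; auto; eapply Rle_trans; eauto.
Qed.

Lemma Gf_eq g u k : Gf g u k = u k - Tf g u k.
Proof. unfold Tf; ring. Qed.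

Lemma Good_G g u : Good g u -> Good g (Gf g u).
Proof.
  intros (v & r & D & Hv & Hr & HD & H).
  exists v, r, (2 * D)%R. split; [auto|split; [auto|split; [lra|]]].
  assert (E : Gf g u = lc 1 (Copp 1) u (Tf g u)).
  { apply functional_extensionality; intros k; unfold lc; rewrite Gf_eq; ring. }
  intros k k'. rewrite E, Tpow_lc, <- Tpow_S'. unfold lc.
  eapply Rle_trans; [apply Cmod_triangle|]. rewrite !Cmod_mult, Cmod_opp, Cmod_1.
  pose proof (H k k'); pose proof (H (S k) k'). simpl pow in *.
  pose proof (pow_le v k ltac:(lra)). pose proof (pow_le r k' ltac:(lra)).
  assert (D * (v * v ^ k) * r ^ k' <= D * v ^ k * r ^ k')%R.
  { apply mono3; auto; [split; nra|lra]. }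
  lra.
Qed.

Definition Gpow g j u := Nat.iter j (Gf g) u.

Lemma Good_Gpow g u j : Good g u -> Good g (Gpow g j u).
Proof. intros H; induction j; [exact H|]. apply Good_G; auto. Qed.

Lemma Good_bnd g u k : Good g u -> bnd (Tpow g k u).
Proof.
  intros (v & r & D & Hv & Hr & HD & H). exists (D * v ^ k)%R, r. split; auto.
Qed.

Lemma Good_bnd0 g u : Good g u -> bnd u.
Proof. intros H. apply (Good_bnd g u 0 H). Qed.

Close Scope C_scope.
Open Scope R_scope.
Open Scope R_scope.
Open Scope C_scope.

Lemma INR2S k : RtoC (INR (2 * S k)) = RtoC (INR (2 * k)) + RtoC 2.
Proof. rewrite <- RtoC_plus. f_equal. replace (2 * S k)%nat with (2 * k + 2)%nat by lia. rewrite plus_INR. f_equal. Qed.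

Lemma INRS k : RtoC (INR (S k)) = RtoC (INR k) + 1.
Proof. rewrite S_INR, RtoC_plus. reflexivity. Qed.

Lemma NT g u : Tf g (Nf u) = lc 1 (Copp (RtoC 2)) (Nf (Tf g u)) (Gf g u).
Proof.
  apply functional_extensionality; intros k. unfold Tf, Nf, Gf, lc.
  rewrite INR2S. replace (2 * k + 2)%nat with (2 * S k)%nat by lia. ring.
Qed.

Lemma NTk g u k : Tpow g (S k) (Nf u) =
  lc 1 (Copp (RtoC 2 * RtoC (INR (S k)))) (Nf (Tpow g (S k) u))
     (lc 1 (Copp 1) (Tpow g k u) (Tpow g (S k) u)).
Proof.
  induction k.
  - rewrite Tpow_S. simpl Tpow. rewrite NT. apply functional_extensionality; intros k'.
    unfold lc. rewrite Gf_eq. simpl INR. ring.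
  - rewrite Tpow_S, IHk, !Tf_lc, NT, <- !Tpow_S.
    apply functional_extensionality; intros k'. unfold lc.
    rewrite Gf_eq, <- Tpow_S. rewrite (INRS (S k)). ring.
Qed.

Lemma gf_rel (f g : nat -> C) (beta : C) :
  (forall n : nat, Nat.even n = true ->
     Cminus (Cmult (g (n + 2)%nat) (f (n + 2)%nat))
            (if Nat.leb 2 n then Cmult (g n) (f n) else RtoC 0) = beta) ->
  forall k, g (2 * k + 2)%nat * f (2 * k + 2)%nat = (RtoC (INR k) + 1) * beta.
Proof.
  intros H k. induction k.
  - specialize (H 0%nat eq_refl). simpl in *. rewrite <- H. simpl INR. ring.
  - specialize (H (2 * S k)%nat (Nat.even_even _)).
    replace (Nat.leb 2 (2 * S k)) with true in H by (symmetry; apply Nat.leb_le; lia).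
    replace (2 * S k)%nat with (2 * k + 2)%nat in H at 3 4 by lia.
    rewrite IHk in H. rewrite INRS.
    set (X := g (2 * S k + 2)%nat * f (2 * S k + 2)%nat) in *.
    transitivity (X - (RtoC (INR k) + 1) * beta + (RtoC (INR k) + 1) * beta); [ring|].
    rewrite H. ring.
Qed.

Lemma Af_0 f u : Af f u 0 = RtoC 0.
Proof. reflexivity. Qed.
Lemma Af_S f u m : Af f u (S m) = f (2 * S m)%nat * u m.
Proof. reflexivity. Qed.

Section TA.
Variables (f g : nat -> C) (beta : C).
Hypothesis Hgf : forall k, g (2 * k + 2)%nat * f (2 * k + 2)%nat = (RtoC (INR k) + 1) * beta.

Lemma TA u : Tf g (Af f u) = lc 1 (Copp beta) (Af f (Tf g u)) u.
Proof.
  apply functional_extensionality; intros k. unfold Tf, Gf, lc.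
  destruct k as [|m]; rewrite ?Af_0, ?Af_S.
  - pose proof (Hgf 0). simpl in H |- *.
    assert (Hb: beta = g 2%nat * f 2%nat) by (rewrite H; ring). rewrite Hb. ring.
  - assert (Hb : beta = g (2 * S m + 2)%nat * f (2 * S m + 2)%nat - g (2 * m + 2)%nat * f (2 * m + 2)%nat).
    { rewrite !Hgf, INRS. ring. }
    replace (f (2 * S (S m))%nat) with (f (2 * S m + 2)%nat) by (f_equal; lia).
    replace (f (2 * S m)%nat) with (f (2 * m + 2)%nat) by (f_equal; lia).
    rewrite Hb. ring.
Qed.

Lemma TAk u k : Tpow g (S k) (Af f u) =
  lc 1 (Copp (RtoC (INR (S k)) * beta)) (Af f (Tpow g (S k) u)) (Tpow g k u).
Proof.
  induction k.
  - rewrite Tpow_S. simpl Tpow. rewrite TA. apply functional_extensionality; intros k'.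
    unfold lc. simpl INR. ring.
  - rewrite Tpow_S, IHk, !Tf_lc, TA, <- !Tpow_S.
    apply functional_extensionality; intros k'. unfold lc.
    rewrite (INRS (S k)). ring.
Qed.
End TA.

Close Scope C_scope.
Open Scope R_scope.
Open Scope R_scope.

Lemma Cmod_RtoC_pos x : 0 <= x -> Cmod (RtoC x) = x.
Proof. intros H. rewrite Cmod_R, Rabs_pos_eq; auto. Qed.

Lemma INR_S_ge1 n : 1 <= INR (S n).
Proof. rewrite S_INR. pose proof (pos_INR n). lra. Qed.

Lemma half_bump v : 0 <= v < 1 -> 0 <= v < (v + 1) / 2 /\ (v + 1) / 2 < 1 /\ 0 < (v + 1) / 2.
Proof. lra. Qed.

Lemma Cmod_m1 x : Cmod (Cmult (Copp 1) x) = Cmod x.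
Proof. rewrite Cmod_mult, Cmod_opp, Cmod_1. ring. Qed.

Lemma Cmod_2INR k : Cmod (Cmult (RtoC 2) (RtoC (INR k))) = 2 * INR k.
Proof. rewrite <- RtoC_mult, Cmod_RtoC_pos; auto. apply Rmult_le_pos; [lra|apply pos_INR]. Qed.

Lemma inv_ge1 v : 0 < v <= 1 -> 1 <= / v.
Proof. intros. apply Rle_trans with (/1); [rewrite Rinv_1; lra|apply Rinv_le_contravar; lra]. Qed.

Lemma Good_N g u : Good g u -> Good g (Nf u).
Proof.
  intros (v & r & D & Hv & Hr & HD & H).
  destruct (half_bump v Hv) as (Hv1a & Hv1b & Hv1c). set (v1 := (v + 1) / 2) in *.
  destruct (half_bump r Hr) as (Hr1a & Hr1b & Hr1c). set (r1 := (r + 1) / 2) in *.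
  destruct (bump v v1 Hv1a) as (C1 & HC1 & B1).
  destruct (bump r r1 Hr1a) as (C2 & HC2 & B2).
  pose proof (inv_ge1 v1 ltac:(lra)) as Hiv.
  set (D' := 6 * D * C1 * C2 / v1).
  assert (HD' : 0 <= D') by (unfold D', Rdiv; repeat apply Rmult_le_pos; lra).
  exists v1, r1, D'.
  split; [lra|split; [lra|split; [auto|]]].
  assert (Key : forall k k', 6 * D * (INR (S k) * v ^ k) * (INR (S k') * r ^ k') <= D' * v1 ^ S k * r1 ^ k').
  { intros k k'. pose proof (B1 k). pose proof (B2 k').
    pose proof (pow_le v1 k ltac:(lra)). pose proof (pow_le r1 k' ltac:(lra)).
    pose proof (pow_le v k ltac:(lra)). pose proof (pow_le r k' ltac:(lra)).
    pose proof (pos_INR (S k)). pose proof (pos_INR (S k')).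
    apply Rle_trans with (6 * D * (C1 * v1 ^ k) * (C2 * r1 ^ k')).
    { apply mono3; try lra; split; try lra; apply Rmult_le_pos; lra. }
    unfold D'. simpl pow. right. field. lra. }
  intros k k'.
  pose proof (pow_le v k ltac:(lra)). pose proof (pow_le r k' ltac:(lra)).
  pose proof (INR_S_ge1 k). pose proof (INR_S_ge1 k').
  assert (HINR2 : INR (2 * k') <= 2 * INR (S k')).
  { rewrite mult_INR, (S_INR k'). replace (INR 2) with 2 by (simpl; ring). pose proof (pos_INR k'). lra. }
  pose proof (pos_INR (2 * k')).
  destruct k as [|k].
  - simpl Tpow. unfold Nf. rewrite Cmod_mult, Cmod_RtoC_pos; auto.
    specialize (H 0%nat k'). simpl Tpow in H. simpl pow in *.
    pose proof (Cmod_ge_0 (u k')). pose proof (Key 0%nat k'). simpl pow in H5.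
    replace (INR 1) with 1 in H5 by reflexivity.
    assert (D' * (v1 * 1) * r1 ^ k' <= D' * 1 * r1 ^ k').
    { apply mono3; try lra. split; [apply pow_le|]; lra. }
    assert (INR (2 * k') * Cmod (u k') <= 2 * INR (S k') * (D * 1 * r ^ k')) by (apply Rmult_le_compat; lra).
    assert (0 <= D * (INR (S k') * r ^ k')) by (apply Rmult_le_pos; nra).
    nra.
  - rewrite NTk. unfold lc. rewrite Cmult_1_l.
    eapply Rle_trans; [apply Cmod_triangle|]. rewrite Cmod_mult, Cmod_opp, Cmod_2INR.
    rewrite Cmult_1_l. eapply Rle_trans; [apply Rplus_le_compat_l, Rmult_le_compat_l; [pose proof (pos_INR (S k)); lra|apply Cmod_triangle]|].
    rewrite Cmod_m1.
    unfold Nf. rewrite Cmod_mult, Cmod_RtoC_pos; auto.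
    pose proof (H (S k) k'). pose proof (H k k').
    pose proof (Cmod_ge_0 (Tpow g (S k) u k')). pose proof (Cmod_ge_0 (Tpow g k u k')).
    pose proof (pow_le v k ltac:(lra)). pose proof (INR_S_ge1 k).
    assert (Hvs : v ^ S k <= v ^ k) by (apply pow_anti; lia || lra).
    eapply Rle_trans; [|apply (Key k k')].
    set (a := INR (S k) * v ^ k). set (b := INR (S k') * r ^ k').
    assert (Hva : v ^ k <= a) by (unfold a; nra).
    assert (Hrb : r ^ k' <= b) by (unfold b; nra).
    assert (T1 : INR (2 * k') * Cmod (Tpow g (S k) u k') <= 2 * D * v ^ k * b).
    { apply Rle_trans with (2 * INR (S k') * (D * v ^ k * r ^ k')).
      - apply Rmult_le_compat; try lra. eapply Rle_trans; eauto.
        apply mono3; lra.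
      - unfold b. right; ring. }
    assert (T2 : Cmod (Tpow g k u k') + Cmod (Tpow g (S k) u k') <= 2 * D * v ^ k * r ^ k').
    { assert (D * v ^ S k * r ^ k' <= D * v ^ k * r ^ k') by (apply mono3; lra). lra. }
    assert (T3 : 2 * INR (S k) * (Cmod (Tpow g k u k') + Cmod (Tpow g (S k) u k')) <= 4 * D * a * b).
    { apply Rle_trans with (2 * INR (S k) * (2 * D * v ^ k * r ^ k')).
      apply Rmult_le_compat_l; [pose proof (pos_INR (S k)); lra|auto].
      apply Rle_trans with (4 * D * a * r ^ k'); [unfold a; right; ring|].
      assert (0 <= a) by (unfold a; apply Rmult_le_pos; [apply pos_INR|lra]).
      apply mono3; lra. }
    assert (2 * D * v ^ k * b <= 2 * D * a * b).
    { apply mono3; try lra; try (unfold b; nra). }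
    lra.
Qed.

Lemma Af_bound f Cf (W : nat -> C) B r r1 C2 :
  0 <= Cf -> (forall m, Cmod (f (2 * S m)%nat) <= Cf * INR (S m)) ->
  0 <= B -> 0 <= r -> 0 < r1 ->
  (forall n, INR (S n) * r ^ n <= C2 * r1 ^ n) ->
  (forall k', Cmod (W k') <= B * r ^ k') ->
  forall k', Cmod (Af f W k') <= (Cf * B * C2 / r1) * r1 ^ k'.
Proof.
  intros HCf Hf HB Hr Hr1 B2 HW k'. destruct k' as [|m].
  - rewrite Af_0, Cmod_0. assert (0 <= C2).
    { specialize (B2 0%nat). simpl in B2. lra. }
    unfold Rdiv. simpl. repeat apply Rmult_le_pos; try lra. left; apply Rinv_0_lt_compat; lra.
  - rewrite Af_S, Cmod_mult. specialize (Hf m). specialize (HW m). specialize (B2 m).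
    pose proof (Cmod_ge_0 (f (2 * S m)%nat)). pose proof (Cmod_ge_0 (W m)).
    pose proof (pow_le r m Hr). pose proof (pos_INR (S m)).
    apply Rle_trans with ((Cf * INR (S m)) * (B * r ^ m)); [apply Rmult_le_compat; lra|].
    apply Rle_trans with (Cf * B * (C2 * r1 ^ m)).
    { replace (Cf * INR (S m) * (B * r ^ m)) with (Cf * B * (INR (S m) * r ^ m)) by ring.
      apply Rmult_le_compat_l; [nra|lra]. }
    right. simpl pow. field. lra.
Qed.

Lemma Good_A f g beta Cf :
  (forall k, Cmult (g (2 * k + 2)%nat) (f (2 * k + 2)%nat) = Cmult (Cplus (RtoC (INR k)) 1) beta) ->
  0 <= Cf -> (forall m, Cmod (f (2 * S m)%nat) <= Cf * INR (S m)) ->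
  forall u, Good g u -> Good g (Af f u).
Proof.
  intros Hgf HCf Hf u (v & r & D & Hv & Hr & HD & H).
  destruct (half_bump v Hv) as (Hv1a & Hv1b & Hv1c). set (v1 := (v + 1) / 2) in *.
  destruct (half_bump r Hr) as (Hr1a & Hr1b & Hr1c). set (r1 := (r + 1) / 2) in *.
  destruct (bump v v1 Hv1a) as (C1 & HC1 & B1).
  destruct (bump r r1 Hr1a) as (C2 & HC2 & B2).
  pose proof (inv_ge1 v1 ltac:(lra)) as Hiv.
  assert (Hir1 : 0 < / r1) by (apply Rinv_0_lt_compat; lra).
  assert (Hiv1 : 0 < / v1) by (apply Rinv_0_lt_compat; lra).
  set (E := Cf * D * C2 / r1 + Cmod beta * D * C1).
  assert (HE : 0 <= E).
  { unfold E, Rdiv. pose proof (Cmod_ge_0 beta).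
    apply Rplus_le_le_0_compat; repeat apply Rmult_le_pos; lra. }
  exists v1, r1, (E / v1).
  split; [lra|split; [lra|split]].
  { unfold Rdiv; apply Rmult_le_pos; lra. }
  intros k k'.
  pose proof (pow_le v1 k ltac:(lra)). pose proof (pow_le r1 k' ltac:(lra)).
  pose proof (pow_le v k ltac:(lra)). pose proof (pow_le r k' ltac:(lra)).
  destruct k as [|k].
  - simpl Tpow.
    assert (HW : forall k', Cmod (u k') <= D * r ^ k').
    { intros k0. specialize (H 0%nat k0). simpl in H. lra. }
    pose proof (Af_bound f Cf u D r r1 C2 HCf Hf HD ltac:(lra) ltac:(lra) B2 HW k').
    eapply Rle_trans; [apply H4|]. simpl pow.
    assert (Cf * D * C2 / r1 <= E / v1).
    { apply Rle_trans with E. unfold E. pose proof (Cmod_ge_0 beta).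
      assert (0 <= Cmod beta * D * C1) by (repeat apply Rmult_le_pos; lra). lra.
      unfold Rdiv. pose proof (inv_ge1 v1 ltac:(lra)). nra. }
    nra.
  - rewrite (TAk f g beta Hgf). unfold lc. rewrite Cmult_1_l.
    eapply Rle_trans; [apply Cmod_triangle|]. rewrite Cmod_mult, Cmod_opp, Cmod_mult.
    rewrite Cmod_RtoC_pos; [|apply pos_INR].
    assert (HW : forall k', Cmod (Tpow g (S k) u k') <= (D * v ^ k) * r ^ k').
    { intros k0. specialize (H (S k) k0). pose proof (pow_le r k0 ltac:(lra)).
      apply Rle_trans with (D * v ^ S k * r ^ k0); auto. apply mono3; try lra.
      split; [apply pow_le; lra|apply pow_anti; lra || lia]. }
    pose proof (Af_bound f Cf _ (D * v ^ k) r r1 C2 HCf Hf ltac:(apply Rmult_le_pos; [lra|apply pow_le; lra]) ltac:(lra) ltac:(lra) B2 HW k').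
    pose proof (H k k'). pose proof (B1 k). pose proof (pos_INR (S k)). pose proof (Cmod_ge_0 beta). pose proof (pow_le v k ltac:(lra)). pose proof (pow_le v1 k ltac:(lra)).
    pose proof (Cmod_ge_0 (Tpow g k u k')).
    assert (T1 : Cf * (D * v ^ k) * C2 / r1 * r1 ^ k' <= Cf * D * C2 / r1 * v1 ^ k * r1 ^ k').
    { assert (v ^ k <= v1 ^ k) by (apply pow_incr; lra).
      assert (0 <= Cf * D * C2 / r1).
      { unfold Rdiv; repeat apply Rmult_le_pos; lra. }
      replace (Cf * (D * v ^ k) * C2 / r1 * r1 ^ k') with (Cf * D * C2 / r1 * v ^ k * r1 ^ k') by (field; lra).
      apply mono3; lra. }
    assert (T2 : INR (S k) * Cmod beta * Cmod (Tpow g k u k') <= Cmod beta * D * C1 * v1 ^ k * r1 ^ k').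
    { apply Rle_trans with (Cmod beta * D * (INR (S k) * v ^ k) * r ^ k').
      { apply Rle_trans with (INR (S k) * Cmod beta * (D * v ^ k * r ^ k')).
        apply Rmult_le_compat_l; [nra|auto]. right; ring. }
      apply Rle_trans with (Cmod beta * D * (C1 * v1 ^ k) * r1 ^ k').
      { apply mono3; [nra| split; [apply Rmult_le_pos; lra|auto] | split; [lra|apply pow_incr; lra]]. }
      right; ring. }
    apply Rle_trans with (E * v1 ^ k * r1 ^ k').
    { unfold E. lra. }
    right. simpl pow. field. lra.
Qed.

Close Scope C_scope.
Open Scope R_scope.
Open Scope R_scope.

Definition Sf g K u : nat -> C := fun k' =>
  Copp (csum (fun k => Cmult (Cinv (RtoC (INR (S k)))) (Tpow g (S k) u k')) K).
Definition Lf g u : nat -> C := fun k' =>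
  Copp (CSeries (fun k => Cmult (Cinv (RtoC (INR (S k)))) (Tpow g (S k) u k'))).

Lemma Cmod_invS k : Cmod (Cinv (RtoC (INR (S k)))) <= 1.
Proof.
  pose proof (INR_S_ge1 k).
  rewrite Cmod_inv. rewrite Cmod_RtoC_pos; [|lra].
  apply Rle_trans with (/1); [apply Rinv_le_contravar; lra|rewrite Rinv_1; lra].
  apply RtoC_neq0. lra.
Qed.

Section Log.
Variables (g u : nat -> C) (v r D : R).
Hypotheses (Hv : 0 <= v < 1) (Hr : 0 <= r < 1) (HD : 0 <= D)
  (H : forall k k', Cmod (Tpow g k u k') <= D * v ^ k * r ^ k').

Lemma term_bound k' k :
  Cmod (Cmult (Cinv (RtoC (INR (S k)))) (Tpow g (S k) u k')) <= (D * r ^ k') * v ^ k.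
Proof.
  rewrite Cmod_mult. pose proof (Cmod_invS k). pose proof (Cmod_ge_0 (Cinv (RtoC (INR (S k))))).
  pose proof (H (S k) k'). pose proof (Cmod_ge_0 (Tpow g (S k) u k')).
  pose proof (pow_le v k ltac:(lra)). pose proof (pow_le r k' ltac:(lra)).
  apply Rle_trans with (1 * (D * v ^ S k * r ^ k')); [apply Rmult_le_compat; lra|].
  assert (D * v ^ S k * r ^ k' <= D * v ^ k * r ^ k') by (apply mono3; try lra; split; [apply pow_le; lra|apply pow_anti; lra || lia]). lra.
Qed.

Lemma SL_bound K k' : Cmod (Cminus (Sf g K u k') (Lf g u k')) <= (2 * D / (1 - v)) * v ^ K * r ^ k'.
Proof.
  unfold Sf, Lf.
  replace (Cminus (Copp (csum (fun k => Cmult (Cinv (RtoC (INR (S k)))) (Tpow g (S k) u k')) K))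
                  (Copp (CSeries (fun k => Cmult (Cinv (RtoC (INR (S k)))) (Tpow g (S k) u k')))))
    with (Copp (Cminus (csum (fun k => Cmult (Cinv (RtoC (INR (S k)))) (Tpow g (S k) u k')) K)
                  (CSeries (fun k => Cmult (Cinv (RtoC (INR (S k)))) (Tpow g (S k) u k'))))) by ring.
  rewrite Cmod_opp. eapply Rle_trans. apply (ctail _ (D * r ^ k') v Hv (term_bound k') K).
  right. field. lra.
Qed.

Lemma L_bound k' : Cmod (Lf g u k') <= (2 * D / (1 - v)) * r ^ k'.
Proof.
  pose proof (SL_bound 0 k'). unfold Sf in H0. simpl csum in H0.
  replace (Cminus (Copp (RtoC 0)) (Lf g u k')) with (Copp (Lf g u k')) in H0 by ring.
  rewrite Cmod_opp in H0. simpl pow in H0. lra.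
Qed.

Lemma S_bound K k' : Cmod (Sf g K u k') <= (4 * D / (1 - v)) * r ^ k'.
Proof.
  pose proof (SL_bound K k'). pose proof (L_bound k').
  replace (Sf g K u k') with (Cplus (Cminus (Sf g K u k') (Lf g u k')) (Lf g u k')) by ring.
  eapply Rle_trans; [apply Cmod_triangle|].
  pose proof (pow_le_one v K ltac:(lra)). pose proof (pow_le v K ltac:(lra)).
  pose proof (pow_le r k' ltac:(lra)).
  assert (0 <= 2 * D / (1 - v)) by (unfold Rdiv; apply Rmult_le_pos; [lra|left; apply Rinv_0_lt_compat; lra]).
  assert (2 * D / (1 - v) * v ^ K * r ^ k' <= 2 * D / (1 - v) * 1 * r ^ k') by (apply mono3; lra).
  replace (4 * D / (1 - v) * r ^ k') with (2 * D / (1 - v) * 1 * r ^ k' + 2 * D / (1 - v) * r ^ k') by (field; lra).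
  lra.
Qed.
End Log.

Lemma csum_ext a b K : (forall k, a k = b k) -> csum a K = csum b K.
Proof. intros Hab; induction K; simpl; auto. rewrite IHK, Hab; auto. Qed.

Lemma csum_zero K : csum (fun _ => RtoC 0) K = RtoC 0.
Proof. induction K; simpl; auto. rewrite IHK. ring. Qed.

Lemma ev_csum (c : nat -> C) (w : nat -> nat -> C) K :
  (fun n => csum (fun k => Cmult (c k) (ev (w k) n)) K) =
  ev (fun k' => csum (fun k => Cmult (c k) (w k k')) K).
Proof.
  apply functional_extensionality; intros n.
  destruct (parity n) as [[j ->]|[j ->]].
  - rewrite ev_even. apply csum_ext; intros; rewrite ev_even; auto.
  - rewrite ev_odd. rewrite <- (csum_zero K). apply csum_ext; intros; rewrite ev_odd; ring.
Qed.

Lemma ev_opp (w : nat -> C) : (fun n => Copp (ev w n)) = ev (fun k => Copp (w k)).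
Proof.
  apply functional_extensionality; intros n.
  destruct (parity n) as [[j ->]|[j ->]]; [rewrite !ev_even; auto|rewrite !ev_odd; ring].
Qed.

Lemma Good_T g u k : Good g u -> Good g (Tpow g k u).
Proof.
  intros (v & r & D & Hv & Hr & HD & H). exists v, r, (D * v ^ k).
  split; [auto|split; [auto|split]]. apply Rmult_le_pos; [lra|apply pow_le; lra].
  intros j k'. unfold Tpow. rewrite <- Nat.iter_add. fold (Tpow g (j + k) u).
  eapply Rle_trans; [apply H|]. rewrite pow_add. right; ring.
Qed.

Lemma opow_G g u : Good g u -> forall k, opow (gN2L2 g) k (ev u) (ev (Gpow g k u)).
Proof.
  intros HG k. induction k; simpl.
  - split; [apply bnd_l2, (Good_bnd0 g); auto|auto].
  - exists (ev (Gpow g k u)). split; auto.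
    apply gN2L2_ev; apply bnd_l2, (Good_bnd0 g); [apply Good_Gpow|apply Good_G, Good_Gpow]; auto.
Qed.

Lemma opow_T g u : Good g u -> forall k, opow (one_minus (gN2L2 g)) k (ev u) (ev (Tpow g k u)).
Proof.
  intros HG k. induction k; simpl.
  - split; [apply bnd_l2, (Good_bnd0 g); auto|auto].
  - exists (ev (Tpow g k u)). split; auto.
    apply (one_minus_ev g (Tpow g k u)); apply bnd_l2, (Good_bnd0 g); [apply Good_T|apply Good_G, Good_T]; auto.
Qed.

Lemma log_ev g u : Good g u -> log_op (gN2L2 g) (ev u) (ev (Lf g u)).
Proof.
  intros HG. split.
  { intros k. exists (ev (Gpow g k u)). apply opow_G; auto. }
  exists (fun k => ev (Tpow g k u)). split; [apply opow_T; auto|].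
  destruct HG as (v & r & D & Hv & Hr & HD & H).
  assert (E : (fun K => fun n => Copp (csum (fun k => Cmult (Cinv (RtoC (INR (S k)))) (ev (Tpow g (S k) u) n)) K))
            = fun K => ev (Sf g K u)).
  { apply functional_extensionality; intros K.
    apply functional_extensionality; intros n.
    destruct (parity n) as [[j ->]|[j ->]].
    - rewrite ev_even. unfold Sf. f_equal. apply csum_ext; intros; rewrite ev_even; auto.
    - rewrite ev_odd.
      replace (RtoC 0) with (Copp (csum (fun _ => RtoC 0) K)) by (rewrite csum_zero; ring).
      f_equal. apply csum_ext; intros; rewrite ev_odd; ring. }
  rewrite E. clear E.
  apply (l2conv_ev (fun K => Sf g K u) (Lf g u) (2 * D / (1 - v)) v r Hv Hr).
  - intros K k'. apply SL_bound; auto.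
  - intros K. exists (4 * D / (1 - v)), r. split; auto. intros; apply S_bound; auto.
  - exists (2 * D / (1 - v)), r. split; auto. intros; apply L_bound; auto.
Qed.

Close Scope C_scope.
Open Scope R_scope.
Open Scope R_scope.

Lemma bnd_lc a b u w : bnd u -> bnd w -> bnd (lc a b u w).
Proof.
  intros (c1 & r1 & Hr1 & H1) (c2 & r2 & Hr2 & H2).
  exists (Cmod a * Rmax c1 0 + Cmod b * Rmax c2 0), (Rmax r1 r2).
  split. { split; [eapply Rle_trans; [|apply Rmax_l]; lra|apply Rmax_lub_lt; lra]. }
  intros k. unfold lc. eapply Rle_trans; [apply Cmod_triangle|]. rewrite !Cmod_mult.
  pose proof (Cmod_ge_0 a); pose proof (Cmod_ge_0 b).
  pose proof (H1 k); pose proof (H2 k).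
  assert (0 <= c1) by (pose proof (H1 0%nat); pose proof (Cmod_ge_0 (u 0%nat)); simpl in *; lra).
  assert (0 <= c2) by (pose proof (H2 0%nat); pose proof (Cmod_ge_0 (w 0%nat)); simpl in *; lra).
  assert (E1 : c1 * r1 ^ k <= Rmax c1 0 * Rmax r1 r2 ^ k).
  { apply Rmult_le_compat; try lra. apply pow_le; lra. apply Rmax_l.
    apply pow_incr; split; [lra|apply Rmax_l]. }
  assert (E2 : c2 * r2 ^ k <= Rmax c2 0 * Rmax r1 r2 ^ k).
  { apply Rmult_le_compat; try lra. apply pow_le; lra. apply Rmax_l.
    apply pow_incr; split; [lra|apply Rmax_r]. }
  apply Rle_trans with (Cmod a * (Rmax c1 0 * Rmax r1 r2 ^ k) + Cmod b * (Rmax c2 0 * Rmax r1 r2 ^ k)); [|right; ring].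
  apply Rplus_le_compat; apply Rmult_le_compat_l; auto; eapply Rle_trans; eauto.
Qed.

Lemma bnd_ext u w : (forall k, u k = w k) -> bnd u -> bnd w.
Proof. intros E (c & r & Hr & H). exists c, r. split; auto. intros k; rewrite <- E; auto. Qed.

Lemma csum_S a K : csum a (S K) = Cplus (csum a K) (a K).
Proof. reflexivity. Qed.

Lemma comm_partial g u K k' :
  Cminus (Nf (Sf g K u) k') (Sf g K (Nf u) k') =
  Cmult (Copp (RtoC 2)) (Cminus (u k') (Tpow g K u k')).
Proof.
  induction K.
  - unfold Nf, Sf. simpl. ring.
  - unfold Sf in *. rewrite !csum_S. rewrite NTk. unfold lc, Nf in *. cbv beta. rewrite !csum_S.
    set (A := csum (fun k => Cmult (Cinv (RtoC (INR (S k)))) (Tpow g (S k) u k')) K) in *.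
    set (B := csum (fun k => Cmult (Cinv (RtoC (INR (S k)))) (Tpow g (S k)
              (fun k0 => Cmult (RtoC (INR (2 * k0))) (u k0)) k')) K) in *.
    transitivity (Cminus (Cmult (RtoC (INR (2 * k'))) (Copp A)) (Copp B)
       - RtoC 2 * (Tpow g K u k' - Tpow g (S K) u k'))%C.
    + field. apply RtoC_neq0. pose proof (INR_S_ge1 K). lra.
    + rewrite IHK. ring.
Qed.

Lemma Cmod_swap a b : Cmod (Cminus a b) = Cmod (Cminus b a).
Proof. rewrite <- Cmod_opp. f_equal. ring. Qed.

Lemma lim_le0 x M m : 0 <= m < 1 -> (forall K, x <= M * m ^ K) -> x <= 0.
Proof.
  intros Hm H.
  assert (Rbar_le x 0).
  { apply is_lim_seq_le with (u := fun _ => x) (v := fun K => M * m ^ K).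
    auto. apply is_lim_seq_const. apply is_lim_geom_scal; auto. }
  simpl in H0. auto.
Qed.

Lemma NL_identity g u : Good g u -> Good g (Nf u) ->
  forall k', Nf (Lf g u) k' = Cplus (Lf g (Nf u) k') (Cmult (Copp (RtoC 2)) (u k')).
Proof.
  intros (v & r & D & Hv & Hr & HD & H) (v2 & r2 & D2 & Hv2 & Hr2 & HD2 & H2) k'.
  set (e := Cminus (Nf (Lf g u) k') (Cplus (Lf g (Nf u) k') (Cmult (Copp (RtoC 2)) (u k')))).
  assert (He : forall K, Cmod e <= (INR (2 * k') * (2 * D / (1 - v) * r ^ k') +
                                     2 * D2 / (1 - v2) * r2 ^ k' + 2 * (D * r ^ k')) * Rmax v v2 ^ K).
  { intros K.
    assert (Ee : e = Cplus (Cplus (Cmult (RtoC (INR (2 * k'))) (Cminus (Lf g u k') (Sf g K u k')))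
                             (Copp (Cminus (Lf g (Nf u) k') (Sf g K (Nf u) k'))))
                       (Cmult (RtoC 2) (Tpow g K u k'))).
    { unfold e. pose proof (comm_partial g u K k'). unfold Nf in *.
      transitivity (Cplus (Cplus (Cmult (RtoC (INR (2 * k'))) (Cminus (Lf g u k') (Sf g K u k')))
                             (Copp (Cminus (Lf g (fun k => Cmult (RtoC (INR (2 * k))) (u k)) k')
                                      (Sf g K (fun k => Cmult (RtoC (INR (2 * k))) (u k)) k'))))
                       (Cplus (Cminus (Cmult (RtoC (INR (2 * k'))) (Sf g K u k'))
                                      (Sf g K (fun k => Cmult (RtoC (INR (2 * k))) (u k)) k'))
                              (Cmult (RtoC 2) (u k')))).
      ring. rewrite H0. ring. }
    rewrite Ee.
    pose proof (SL_bound g u v r D Hv Hr HD H K k').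
    pose proof (SL_bound g (Nf u) v2 r2 D2 Hv2 Hr2 HD2 H2 K k').
    pose proof (H K k').
    assert (Cmod (Cminus (Lf g u k') (Sf g K u k')) = Cmod (Cminus (Sf g K u k') (Lf g u k'))).
    { apply Cmod_swap. }
    assert (Cmod (Copp (Cminus (Lf g (Nf u) k') (Sf g K (Nf u) k'))) = Cmod (Cminus (Sf g K (Nf u) k') (Lf g (Nf u) k'))).
    { rewrite Cmod_opp. apply Cmod_swap. }
    eapply Rle_trans; [apply Cmod_triangle|].
    eapply Rle_trans; [apply Rplus_le_compat_r, Cmod_triangle|].
    rewrite !Cmod_mult, H4, H5, Cmod_RtoC_pos, Cmod_RtoC_pos; try lra; try apply pos_INR.
    set (m := Rmax v v2).
    assert (v ^ K <= m ^ K) by (apply pow_incr; split; [lra|apply Rmax_l]).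
    assert (v2 ^ K <= m ^ K) by (apply pow_incr; split; [lra|apply Rmax_r]).
    pose proof (pow_le v K ltac:(lra)). pose proof (pow_le v2 K ltac:(lra)).
    pose proof (pow_le r k' ltac:(lra)). pose proof (pow_le r2 k' ltac:(lra)).
    pose proof (pos_INR (2 * k')).
    assert (0 <= 2 * D / (1 - v)) by (unfold Rdiv; apply Rmult_le_pos; [lra|left; apply Rinv_0_lt_compat; lra]).
    assert (0 <= 2 * D2 / (1 - v2)) by (unfold Rdiv; apply Rmult_le_pos; [lra|left; apply Rinv_0_lt_compat; lra]).
    assert (T1 : INR (2 * k') * Cmod (Cminus (Sf g K u k') (Lf g u k')) <= INR (2 * k') * (2 * D / (1 - v) * r ^ k') * m ^ K).
    { apply Rle_trans with (INR (2 * k') * (2 * D / (1 - v) * v ^ K * r ^ k')).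
      apply Rmult_le_compat_l; auto.
      rewrite !Rmult_assoc. apply Rmult_le_compat_l; auto.
      apply Rmult_le_compat_l; auto. rewrite Rmult_comm. apply Rmult_le_compat_l; auto. }
    assert (T2 : Cmod (Cminus (Sf g K (Nf u) k') (Lf g (Nf u) k')) <= 2 * D2 / (1 - v2) * r2 ^ k' * m ^ K).
    { eapply Rle_trans; eauto. rewrite !Rmult_assoc. apply Rmult_le_compat_l; auto.
      rewrite Rmult_comm. apply Rmult_le_compat_l; auto. }
    assert (T3 : 2 * Cmod (Tpow g K u k') <= 2 * (D * r ^ k') * m ^ K).
    { apply Rle_trans with (2 * (D * v ^ K * r ^ k')). lra.
      rewrite !Rmult_assoc. apply Rmult_le_compat_l; [lra|]. apply Rmult_le_compat_l; auto.
      rewrite Rmult_comm. apply Rmult_le_compat_l; auto. }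
    lra. }
  assert (Hm : 0 <= Rmax v v2 < 1) by (split; [eapply Rle_trans; [|apply Rmax_l]; lra|apply Rmax_lub_lt; lra]).
  pose proof (lim_le0 _ _ _ Hm He). pose proof (Cmod_ge_0 e).
  assert (Cmod e = 0) by lra. apply Cmod_eq_0 in H3. unfold e in H3.
  replace (Nf (Lf g u) k') with (Cplus (Cminus (Nf (Lf g u) k') (Cplus (Lf g (Nf u) k') (Cmult (Copp (RtoC 2)) (u k'))))
     (Cplus (Lf g (Nf u) k') (Cmult (Copp (RtoC 2)) (u k')))) by ring.
  rewrite H3. ring.
Qed.

Close Scope C_scope.
Open Scope R_scope.
Open Scope R_scope.

Lemma comm_ev g w : Good g w ->
  comm_at N_op (scale (Cmult Ci (RtoC (/ 2))) (log_op (gN2L2 g))) (ev w)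
          (fun k => Cmult (Copp Ci) (ev w k)).
Proof.
  intros HG. pose proof (Good_N g w HG) as HN.
  set (c := Cmult Ci (RtoC (/ 2))).
  pose proof (NL_identity g w HG HN) as Hid.
  assert (BL : forall u, Good g u -> bnd (Lf g u)).
  { intros u (v & r & D & Hv & Hr & HD & H). exists (2 * D / (1 - v)), r. split; auto.
    intros; apply (L_bound g u v r D); auto. }
  assert (B1 : bnd (fun k => Cmult c (Lf g w k))).
  { apply (bnd_ext (lc c 0 (Lf g w) (Lf g w))). intros; unfold lc; ring.
    apply bnd_lc; apply BL; auto. }
  assert (B2 : bnd (Nf (fun k => Cmult c (Lf g w k)))).
  { apply (bnd_ext (lc c (Cmult c (Copp (RtoC 2))) (Lf g (Nf w)) w)).
    intros k; unfold lc. assert (Hk := Hid k).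
    change (Nf (Lf g w) k) with (Cmult (RtoC (INR (2 * k))) (Lf g w k)) in Hk.
    change (Nf (fun k0 => Cmult c (Lf g w k0)) k) with (Cmult (RtoC (INR (2 * k))) (Cmult c (Lf g w k))).
    transitivity (Cmult c (Cmult (RtoC (INR (2 * k))) (Lf g w k))); [rewrite Hk; ring|ring].
    apply bnd_lc; [apply BL; auto|apply (Good_bnd0 g); auto]. }
  exists (ev (fun k => Cmult c (Lf g w k))), (ev (Nf (fun k => Cmult c (Lf g w k)))),
         (ev (Nf w)), (ev (fun k => Cmult c (Lf g (Nf w) k))).
  split; [|split; [|split; [|split]]].
  - exists (ev (Lf g w)). split. apply log_ev; auto. rewrite ev_scal. reflexivity.
  - apply N_ev; apply bnd_l2; auto.
  - apply N_ev; apply bnd_l2; apply (Good_bnd0 g); auto.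
  - exists (ev (Lf g (Nf w))). split. apply log_ev; auto. rewrite ev_scal. reflexivity.
  - rewrite ev_sub, ev_scal. apply ev_ext. intros k.
    assert (Hk := Hid k).
    change (Nf (Lf g w) k) with (Cmult (RtoC (INR (2 * k))) (Lf g w k)) in Hk.
    change (Nf (fun k0 => Cmult c (Lf g w k0)) k) with (Cmult (RtoC (INR (2 * k))) (Cmult c (Lf g w k))).
    transitivity (Cminus (Cmult c (Cmult (RtoC (INR (2 * k))) (Lf g w k))) (Cmult c (Lf g (Nf w) k))); [|ring].
    rewrite Hk. unfold c.
    assert (H: Cmult (RtoC (/2)) (RtoC 2) = RtoC 1) by (rewrite <- RtoC_mult, Rinv_l; [reflexivity|lra]).
    transitivity (Cmult (Cmult Ci (Cmult (RtoC (/2)) (RtoC 2))) (Copp (w k))). rewrite H. ring. ring.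
Qed.

Close Scope C_scope.
Open Scope R_scope.
Open Scope R_scope.

Fixpoint Fp (f : nat -> C) (k : nat) : C :=
  match k with O => RtoC 1 | S k' => Cmult (Fp f k') (f (2 * S k')%nat) end.

Lemma Fp_S f k : Fp f (S k) = Cmult (Fp f k) (f (2 * S k)%nat).
Proof. reflexivity. Qed.

Definition xi f (a : C) k : C :=
  Cmult (Cmult (Cpow a k) (Fp f k)) (Cinv (RtoC (INR (Factorial.fact k)))).

Lemma INRS_neq0 k : RtoC (INR (S k)) <> RtoC 0.
Proof. apply RtoC_neq0. pose proof (INR_S_ge1 k). lra. Qed.
Lemma INRfact_neq0 k : RtoC (INR (Factorial.fact k)) <> RtoC 0.
Proof. apply RtoC_neq0. apply INR_fact_neq_0. Qed.

Lemma xi_S f a k : xi f a (S k) =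
  Cmult (Cmult (Cmult (xi f a k) a) (f (2 * S k)%nat)) (Cinv (RtoC (INR (S k)))).
Proof.
  unfold xi. rewrite Fp_S, Cpow_S, fact_simpl, mult_INR, RtoC_mult.
  pose proof (INRS_neq0 k). pose proof (INRfact_neq0 k).
  field. split; auto.
Qed.

Lemma xi_T f g beta a :
  (forall k, Cmult (g (2 * k + 2)%nat) (f (2 * k + 2)%nat) = Cmult (Cplus (RtoC (INR k)) 1) beta) ->
  Tf g (xi f a) = fun k => Cmult (Cminus 1 (Cmult a beta)) (xi f a k).
Proof.
  intros Hgf. apply functional_extensionality; intros k. unfold Tf, Gf.
  rewrite xi_S. replace (f (2 * S k)%nat) with (f (2 * k + 2)%nat) by (f_equal; lia).
  transitivity (Cminus (xi f a k) (Cmult (Cmult (Cmult (g (2 * k + 2)%nat) (f (2 * k + 2)%nat)) (Cmult a (xi f a k))) (Cinv (RtoC (INR (S k)))))); [ring|].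
  rewrite Hgf. rewrite <- INRS. pose proof (INRS_neq0 k). field. auto.
Qed.

Lemma Tpow_eig g u z : Tf g u = (fun k => Cmult z (u k)) ->
  forall k, Tpow g k u = fun k' => Cmult (Cpow z k) (u k').
Proof.
  intros H k. induction k.
  - apply functional_extensionality; intros; simpl; ring.
  - rewrite Tpow_S, IHk. apply functional_extensionality; intros k'.
    transitivity (Cmult (Cpow z k) (Tf g u k')). unfold Tf, Gf; ring.
    rewrite H. rewrite Cpow_S. ring.
Qed.

Lemma Good_eig g u z : Tf g u = (fun k => Cmult z (u k)) -> Cmod z < 1 -> bnd u -> Good g u.
Proof.
  intros H Hz (c & r & Hr & Hb).
  assert (Hc : 0 <= c) by (pose proof (Hb 0%nat) as H0; rewrite pow_O, Rmult_1_r in H0; pose proof (Cmod_ge_0 (u 0%nat)); lra).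
  exists (Cmod z), r, c. split; [split; [apply Cmod_ge_0|auto]|split; [auto|split; [auto|]]].
  intros k k'. rewrite (Tpow_eig g u z H k). rewrite Cmod_mult, Cmod_pow.
  pose proof (pow_le (Cmod z) k (Cmod_ge_0 z)). pose proof (Hb k').
  apply Rle_trans with (Cmod z ^ k * (c * r ^ k')); [apply Rmult_le_compat_l; auto|right; ring].
Qed.

Lemma geo_from_ratio (a : nat -> R) rho K0 : 0 < rho -> (forall k, 0 <= a k) ->
  (forall k, (K0 <= k)%nat -> a (S k) <= rho * a k) ->
  exists C, 0 <= C /\ forall k, a k <= C * rho ^ k.
Proof.
  intros Hrho Ha H.
  set (C := rsum (fun k => a k / rho ^ k) (S K0)).
  assert (Hnn : forall k, 0 <= a k / rho ^ k).
  { intros k; unfold Rdiv; apply Rmult_le_pos; auto. left; apply Rinv_0_lt_compat, pow_lt; auto. }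
  exists C. split. apply rsum_ge0; auto.
  assert (Hsmall : forall k, (k <= K0)%nat -> a k <= C * rho ^ k).
  { intros k Hk. pose proof (rsum_term (fun k => a k / rho ^ k) (S K0) k Hnn ltac:(lia)) as Ht. cbv beta in Ht. fold C in Ht.
    pose proof (pow_lt rho k Hrho).
    replace (a k) with (a k / rho ^ k * rho ^ k) by (field; lra).
    apply Rmult_le_compat_r; lra. }
  intros k. induction k.
  - apply Hsmall; lia.
  - destruct (Compare_dec.le_lt_dec (S k) K0). apply Hsmall; auto.
    eapply Rle_trans. apply H; lia. simpl pow.
    apply Rle_trans with (rho * (C * rho ^ k)). apply Rmult_le_compat_l; lra. right; ring.
Qed.

Lemma growth_from_ev (b : nat -> R) c K0 : 0 <= c -> (forall k, 0 <= b k) ->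
  (forall k, (K0 <= k)%nat -> b k <= c * INR (S k)) ->
  exists Cf, 0 <= Cf /\ forall k, b k <= Cf * INR (S k).
Proof.
  intros Hc Hb H. exists (c + rsum b K0). split. pose proof (rsum_ge0 b K0 Hb); lra.
  intros k. pose proof (INR_S_ge1 k). pose proof (rsum_ge0 b K0 Hb).
  destruct (Compare_dec.le_lt_dec K0 k).
  - specialize (H k l). nra.
  - pose proof (rsum_term b K0 k Hb l). nra.
Qed.

Close Scope C_scope.
Open Scope R_scope.
Open Scope R_scope.

Lemma cross a rho c t : 0 < rho -> 0 < c -> a / rho < t / c -> a * c <= rho * t.
Proof.
  intros Hr Hc H. set (x := t / c) in *.
  assert (Ht : t = x * c) by (unfold x; field; lra).
  assert (E1 : a * c = (a / rho) * rho * c) by (field; lra).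
  assert (E2 : rho * t = x * rho * c) by (rewrite Ht; ring).
  rewrite E1, E2. apply Rmult_le_compat_r; [lra|]. apply Rmult_le_compat_r; lra.
Qed.

Lemma ratio_ev (f : nat -> C) (Mf : Rbar)
  (Hfpos : forall n : nat, (1 <= n)%nat -> 0 < Cmod (f (2 * n)%nat))
  (HMf : is_lim_seq (fun n => INR n / Cmod (f (2 * n)%nat)) Mf) (a : R) :
  0 < a -> Rbar_lt a Mf ->
  exists rho, 0 < rho < 1 /\ exists K0, forall k, (K0 <= k)%nat ->
    a * Cmod (f (2 * S k)%nat) <= rho * INR (S k).
Proof.
  intros Ha Hlt. apply is_lim_seq_spec in HMf.
  destruct Mf as [m| |]; simpl in Hlt; [| |contradiction].
  - set (rho := (1 + a / m) / 2).
    assert (Ham : 0 < a / m < 1).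
    { split. apply Rdiv_lt_0_compat; lra.
      apply Rmult_lt_reg_r with m; [lra|]. unfold Rdiv. rewrite Rmult_assoc, Rinv_l; lra. }
    assert (Hrho : 0 < rho < 1) by (unfold rho; lra).
    assert (HM0 : a / rho < m).
    { apply Rmult_lt_reg_r with rho; [lra|]. unfold Rdiv. rewrite Rmult_assoc, Rinv_l; [|lra].
      unfold rho. replace (m * ((1 + a / m) / 2)) with ((m + a) / 2) by (field; lra). lra. }
    exists rho. split; auto.
    destruct (HMf (mkposreal (m - a / rho) ltac:(lra))) as [N HN].
    exists N. intros k Hk. specialize (HN (S k) ltac:(lia)). change (Rabs (INR (S k) / Cmod (f (2 * S k)%nat) - m) < m - a / rho) in HN.
    apply cross; [lra|apply Hfpos; lia|].
    apply Rabs_def2 in HN. lra.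
  - exists (1 / 2). split; [lra|].
    destruct (HMf (a / (1 / 2))) as [N HN].
    exists N. intros k Hk. specialize (HN (S k) ltac:(lia)).
    apply cross; [lra|apply Hfpos; lia|auto].
Qed.

Section Alpha.
Variables (f g : nat -> C) (beta : C) (Mf : Rbar).
Hypothesis Hgf : forall k, Cmult (g (2 * k + 2)%nat) (f (2 * k + 2)%nat) = Cmult (Cplus (RtoC (INR k)) 1) beta.
Hypothesis Hfpos : forall n : nat, (1 <= n)%nat -> 0 < Cmod (f (2 * n)%nat).
Hypothesis HMf : is_lim_seq (fun n => INR n / Cmod (f (2 * n)%nat)) Mf.

Lemma alpha_facts (alpha : C) :
  Cmod (Cminus (RtoC 1) (Cmult alpha beta)) < 1 -> Rbar_lt (Finite (Cmod alpha)) Mf ->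
  alpha <> RtoC 0 /\
  (exists Cf, 0 <= Cf /\ forall m, Cmod (f (2 * S m)%nat) <= Cf * INR (S m)) /\
  (exists C rho, 0 <= rho < 1 /\ 0 <= C /\ forall k, Cmod (xi f alpha k) <= C * rho ^ k).
Proof.
  intros Hz Hlt.
  assert (Ha0 : alpha <> RtoC 0).
  { intros E. rewrite E in Hz. replace (Cminus (RtoC 1) (Cmult (RtoC 0) beta)) with (RtoC 1) in Hz by ring.
    rewrite Cmod_1 in Hz. lra. }
  assert (Hapos : 0 < Cmod alpha).
  { pose proof (Cmod_ge_0 alpha). destruct H; auto. symmetry in H. apply Cmod_eq_0 in H. contradiction. }
  destruct (ratio_ev f Mf Hfpos HMf (Cmod alpha) Hapos Hlt) as (rho & Hrho & K0 & HK0).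
  split; auto. split.
  - apply (growth_from_ev (fun m => Cmod (f (2 * S m)%nat)) (rho / Cmod alpha) K0).
    + unfold Rdiv; apply Rmult_le_pos; [lra|left; apply Rinv_0_lt_compat; auto].
    + intros; apply Cmod_ge_0.
    + intros k Hk. specialize (HK0 k Hk).
      apply Rmult_le_reg_l with (Cmod alpha); auto.
      replace (Cmod alpha * (rho / Cmod alpha * INR (S k))) with (rho * INR (S k)) by (field; lra). auto.
  - destruct (geo_from_ratio (fun k => Cmod (xi f alpha k)) rho K0) as (C & HC & HB).
    + lra.
    + intros; apply Cmod_ge_0.
    + intros k Hk. rewrite xi_S, !Cmod_mult, Cmod_inv, Cmod_RtoC_pos; [|apply pos_INR|apply INRS_neq0].
      specialize (HK0 k Hk). pose proof (INR_S_ge1 k). pose proof (Cmod_ge_0 (xi f alpha k)).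
      apply Rle_trans with (Cmod (xi f alpha k) * (Cmod alpha * Cmod (f (2 * S k)%nat) / INR (S k))).
      right. unfold Rdiv. ring.
      rewrite (Rmult_comm rho). apply Rmult_le_compat_l; auto.
      apply Rmult_le_reg_r with (INR (S k)); [lra|]. unfold Rdiv. rewrite Rmult_assoc, Rinv_l; lra.
    + exists C, rho. split; [lra|split; auto].
Qed.
End Alpha.

Close Scope C_scope.
Open Scope R_scope.
Open Scope R_scope.

Definition q f (a : C) k : nat -> C :=
  fun k' => if Nat.eqb k' k then Cmult (Cpow a k) (Fp f k) else RtoC 0.

Lemma Omega_q f a : Omega = ev (q f a 0).
Proof.
  apply functional_extensionality; intros n.
  destruct (parity n) as [[j ->]|[j ->]].
  - rewrite ev_even. unfold q. destruct j.
    + simpl. ring.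
    + replace (2 * S j)%nat with (S (S (2 * j))) by lia. reflexivity.
  - rewrite ev_odd. reflexivity.
Qed.

Lemma q_step f a k k' : q f a (S k) k' = Cmult a (Af f (q f a k) k').
Proof.
  destruct k' as [|m].
  - rewrite Af_0. unfold q. simpl. ring.
  - rewrite Af_S. unfold q. simpl Nat.eqb.
    destruct (Nat.eqb_spec m k).
    + subst. rewrite Cpow_S, Fp_S. ring.
    + ring.
Qed.

Lemma bnd_q f a k : bnd (q f a k).
Proof.
  exists (Cmod (Cmult (Cpow a k) (Fp f k)) * 2 ^ k), (/ 2). split; [lra|].
  intros k'. unfold q. destruct (Nat.eqb_spec k' k).
  - subst. rewrite Rmult_assoc, <- Rpow_mult_distr, Rinv_r, pow1; lra.
  - rewrite Cmod_0. apply Rmult_le_pos; [apply Rmult_le_pos; [apply Cmod_ge_0|apply pow_le; lra]|apply pow_le; lra].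
Qed.

Lemma opow_q f a : a <> RtoC 0 -> forall k, opow (scale a (fNLs2 f)) k Omega (ev (q f a k)).
Proof.
  intros Ha k. induction k.
  - simpl. rewrite (Omega_q f a). split; auto. apply bnd_l2, bnd_q.
  - simpl. exists (ev (q f a k)). split; auto.
    exists (ev (Af f (q f a k))). split.
    + apply fNLs2_ev. apply bnd_l2, bnd_q.
      apply bnd_l2. apply (bnd_ext (lc (Cinv a) 0 (q f a (S k)) (q f a (S k)))).
      intros k'. unfold lc. rewrite q_step. field. auto.
      apply bnd_lc; apply bnd_q.
    + rewrite ev_scal. apply ev_ext. intros; apply q_step.
Qed.

Lemma psum f a K k' :
  csum (fun j => Cmult (Cinv (RtoC (INR (Factorial.fact j)))) (q f a j k')) K =
  if Nat.ltb k' K then xi f a k' else RtoC 0.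
Proof.
  induction K.
  - simpl. replace (Nat.ltb k' 0) with false by (symmetry; apply Nat.ltb_ge; lia). reflexivity.
  - rewrite csum_S, IHK. unfold q.
    destruct (Nat.lt_trichotomy k' K) as [H|[H|H]].
    + replace (Nat.ltb k' K) with true by (symmetry; apply Nat.ltb_lt; lia).
      replace (Nat.ltb k' (S K)) with true by (symmetry; apply Nat.ltb_lt; lia).
      replace (Nat.eqb k' K) with false by (symmetry; apply Nat.eqb_neq; lia). ring.
    + subst. rewrite Nat.ltb_irrefl, Nat.eqb_refl.
      replace (Nat.ltb K (S K)) with true by (symmetry; apply Nat.ltb_lt; lia).
      unfold xi. ring.
    + replace (Nat.ltb k' K) with false by (symmetry; apply Nat.ltb_ge; lia).
      replace (Nat.ltb k' (S K)) with false by (symmetry; apply Nat.ltb_ge; lia).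
      replace (Nat.eqb k' K) with false by (symmetry; apply Nat.eqb_neq; lia). ring.
Qed.

Lemma exp_conv f a C rho : 0 <= rho < 1 -> 0 <= C ->
  (forall k, Cmod (xi f a k) <= C * rho ^ k) ->
  l2conv (fun K => fun n => csum (fun k => Cmult (Cinv (RtoC (INR (Factorial.fact k)))) (ev (q f a k) n)) K)
         (ev (xi f a)).
Proof.
  intros Hrho HC Hb.
  assert (E : (fun K => fun n => csum (fun k => Cmult (Cinv (RtoC (INR (Factorial.fact k)))) (ev (q f a k) n)) K)
            = fun K => ev (fun k' => if Nat.ltb k' K then xi f a k' else RtoC 0)).
  { apply functional_extensionality; intros K.
    rewrite (ev_csum (fun k => Cinv (RtoC (INR (Factorial.fact k)))) (fun k => q f a k) K).
    apply ev_ext. intros; apply psum. }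
  rewrite E. set (tau := (1 + rho) / 2).
  assert (Htau : 0 <= tau < 1) by (unfold tau; lra).
  assert (Hrt : rho <= tau * tau) by (unfold tau; nra).
  apply (l2conv_ev _ _ C tau tau Htau Htau).
  - intros K k'. destruct (Nat.ltb k' K) eqn:EK.
    + replace (Cminus (xi f a k') (xi f a k')) with (RtoC 0) by ring. rewrite Cmod_0.
      apply Rmult_le_pos; [apply Rmult_le_pos; [auto|apply pow_le; lra]|apply pow_le; lra].
    + apply Nat.ltb_ge in EK.
      replace (Cminus (RtoC 0) (xi f a k')) with (Copp (xi f a k')) by ring. rewrite Cmod_opp.
      eapply Rle_trans; [apply Hb|]. rewrite Rmult_assoc. apply Rmult_le_compat_l; auto.
      apply Rle_trans with ((tau * tau) ^ k'). apply pow_incr; split; lra.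
      rewrite Rpow_mult_distr. apply Rmult_le_compat_r. apply pow_le; lra.
      apply pow_anti; lra || lia.
  - intros K. exists C, rho. split; auto. intros k'. destruct (Nat.ltb k' K); auto.
    rewrite Cmod_0. apply Rmult_le_pos; auto. apply pow_le; lra.
  - exists C, rho. split; auto.
Qed.

Lemma exp_ev f a C rho : a <> RtoC 0 -> 0 <= rho < 1 -> 0 <= C ->
  (forall k, Cmod (xi f a k) <= C * rho ^ k) ->
  exp_op (scale a (fNLs2 f)) Omega (ev (xi f a)).
Proof.
  intros Ha Hrho HC Hb. split.
  - intros k. exists (ev (q f a k)). apply opow_q; auto.
  - exists (fun k => ev (q f a k)). split. intros; apply opow_q; auto.
    apply (exp_conv f a C rho); auto.
Qed.

Lemma exp_unique f a C rho x : a <> RtoC 0 -> 0 <= rho < 1 -> 0 <= C ->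
  (forall k, Cmod (xi f a k) <= C * rho ^ k) ->
  exp_op (scale a (fNLs2 f)) Omega x -> x = ev (xi f a).
Proof.
  intros Ha Hrho HC Hb (_ & s & Hs & Hconv).
  assert (Es : s = fun k => ev (q f a k)).
  { apply functional_extensionality; intros k.
    apply (opow_fun _ (scale_fun a _ (fNLs2_fun f)) k Omega); auto. apply opow_q; auto. }
  subst s. eapply l2conv_unique; eauto. apply (exp_conv f a C rho); auto.
Qed.

Lemma opow_A f g u : (forall n, Good g (Nat.iter n (Af f) u)) ->
  forall n, opow (fNLs2 f) n (ev u) (ev (Nat.iter n (Af f) u)).
Proof.
  intros HG n. induction n.
  - simpl. split; auto. apply bnd_l2, (Good_bnd0 g), (HG 0%nat).
  - simpl. exists (ev (Nat.iter n (Af f) u)). split; auto.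
    apply fNLs2_ev; apply bnd_l2, (Good_bnd0 g); [apply (HG n)|apply (HG (S n))].
Qed.

Close Scope C_scope.
Open Scope R_scope.

Theorem mainTheorem7 (f g : nat -> C) (beta : C) (Mf : Rbar)
  (Hfg : forall n : nat, Nat.even n = true ->
         Cminus (Cmult (g (n + 2)%nat) (f (n + 2)%nat))
                (if Nat.leb 2 n then Cmult (g n) (f n) else RtoC 0) = beta)
  (Hfpos : forall n : nat, (1 <= n)%nat -> 0 < Cmod (f (2 * n)%nat))
  (HMf : is_lim_seq (fun n => INR n / Cmod (f (2 * n)%nat)) Mf) :
  let inD (alpha : C) : Prop :=
    Cmod (Cminus (RtoC 1) (Cmult alpha beta)) < 1 /\ Rbar_lt (Finite (Cmod alpha)) Mf in
  let A := fNLs2 f in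
  (forall alpha, inD alpha ->
     exists xi, exp_op (scale alpha A) Omega xi /\ forall n, dom (opow A n) xi) /\
  (forall phi,
     LH (fun v => exists (n : nat) (alpha : C) (xi : vec),
                    inD alpha /\ exp_op (scale alpha A) Omega xi /\ opow A n xi v) phi ->
     comm_at N_op (scale (Cmult Ci (RtoC (/ 2))) (log_op (gN2L2 g))) phi
             (fun k => Cmult (Copp Ci) (phi k))).
Proof.
  intros inD A.
  pose proof (gf_rel f g beta Hfg) as Hgf.
  assert (Key : forall alpha, inD alpha ->
    alpha <> RtoC 0 /\
    (exists C rho, 0 <= rho < 1 /\ 0 <= C /\ forall k, Cmod (xi f alpha k) <= C * rho ^ k) /\
    forall n, Good g (Nat.iter n (Af f) (xi f alpha))).
  { intros alpha [Hz Hlt].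
    destruct (alpha_facts f beta Mf Hfpos HMf alpha Hz Hlt) as (Ha & (Cf & HCf & Hgrow) & (C & rho & Hrho & HC & Hb)).
    split; auto. split. exists C, rho; auto.
    intros n. induction n.
    - simpl. apply (Good_eig g (xi f alpha) (Cminus 1 (Cmult alpha beta))).
      apply xi_T; auto. auto. exists C, rho. split; auto.
    - simpl. apply (Good_A f g beta Cf); auto. }
  split.
  - intros alpha HD. destruct (Key alpha HD) as (Ha & (C & rho & Hrho & HC & Hb) & HG).
    exists (ev (xi f alpha)). split.
    + apply (exp_ev f alpha C rho); auto.
    + intros n. exists (ev (Nat.iter n (Af f) (xi f alpha))). apply (opow_A f g); auto.
  - intros phi (m & c & v & Hv & Ephi).
    assert (Hgen : forall j, (j < m)%nat -> exists w, Good g w /\ v j = ev w).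
    { intros j Hj. destruct (Hv j Hj) as (n & alpha & x & HD & Hexp & Hop).
      destruct (Key alpha HD) as (Ha & (C & rho & Hrho & HC & Hb) & HG).
      pose proof (exp_unique f alpha C rho x Ha Hrho HC Hb Hexp). subst x.
      exists (Nat.iter n (Af f) (xi f alpha)). split; auto.
      apply (opow_fun _ (fNLs2_fun f) n (ev (xi f alpha))); auto.
      apply (opow_A f g); auto. }
    assert (Hsum : exists w, Good g w /\
       (fun n => csum (fun j => Cmult (c j) (v j n)) m) = ev w).
    { clear Hv Ephi. induction m.
      - exists (fun _ => RtoC 0). split. apply Good_zero.
        apply functional_extensionality; intros n. simpl.
        destruct (parity n) as [[j ->]|[j ->]]; [rewrite ev_even|rewrite ev_odd]; auto.
      - destruct IHm as (w & Hw & Ew). { intros; apply Hgen; lia. }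
        destruct (Hgen m ltac:(lia)) as (wm & Hwm & Evm).
        exists (lc 1 (c m) w wm). split. apply Good_lc; auto.
        apply functional_extensionality; intros n. rewrite csum_S.
        change (csum (fun j => Cmult (c j) (v j n)) m) with ((fun n => csum (fun j => Cmult (c j) (v j n)) m) n).
        rewrite Ew, Evm. unfold lc.
        destruct (parity n) as [[j ->]|[j ->]]; [rewrite !ev_even|rewrite !ev_odd]; ring. }
    destruct Hsum as (w & Hw & Ew). rewrite Ew in Ephi. subst phi. apply comm_ev; auto.
Qed.
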